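(* Let $n\ge4$, let $C=\mathrm{circ}(1,0,\ldots,0,1)$ of order $n-1$, let $X=2(CC^T+I_{n-1})^{-1}\left[ (n-1)I_{n-1}-J_{n-1}\right]$ and $Y=J_{n-1}+C^TX$. Then $Y=\mathrm{circ}(d_0,d_1,\ldots,d_{n-2})$ where \[d_0=\frac{1}{5}+\frac{4(n-1)}{\sqrt{5}}\left[\frac{2^{n-2}+(-3+\sqrt{5})^{n-2}}{2^{n-1}-(-3+\sqrt{5})^{n-1}} -\frac{2^{n-2}+(-3-\sqrt{5})^{n-2}}{2^{n-1}-(-3-\sqrt{5})^{n-1}}\right]\] and for $j=1,2,\ldots,n-2$, \[d_j=\frac{1}{5}+\frac{2^{n+1-j}(n-1)}{5+\sqrt{5}}\left[\frac{2(-3+\sqrt{5})^{j-1}}{2^{n-1}-(-3+\sqrt{5})^{n-1}} -\frac{(-3-\sqrt{5})^{j}}{2^{n-1}-(-3-\sqrt{5})^{n-1}}\right].\]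
   Context: For $c_0,\dots,c_{k-1}$, $\mathrm{circ}(c_0,\ldots,c_{k-1})$ denotes the $k\times k$ circulant matrix whose $(i,j)$-entry is $c_{(j-i)\bmod k}$. $J_{n-1}$ is the $(n-1)\times(n-1)$ all-ones matrix and $I_{n-1}$ the identity. Note $CC^T+I_{n-1}=\mathrm{circ}(3,1,0,\ldots,0,1)$ is invertible. ($X,Y$ are blocks of the Moore–Penrose inverse of the incidence matrix of the wheel graph $W_n$.) *)

(* Defs.v *)
From HB Require Import structures.
From mathcomp Require Import all_boot all_order all_algebra.
Set Implicit Arguments. Unset Strict Implicit. Unset Printing Implicit Defensive.
Import Order.TTheory GRing.Theory Num.Theory.
Local Open Scope ring_scope.

Definition circ {R : Type} (k : nat) (c : nat -> R) : 'M[R]_k :=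
  \matrix_(i < k, j < k) c ((j + k - i) %% k)%N.

Definition wheel_c {R : pzRingType} (k : nat) (m : nat) : R :=
  if (m == 0)%N || (m == k.-1)%N then 1 else 0.

Definition Jmx {R : pzRingType} (k : nat) : 'M[R]_k := const_mx 1.

(* Main.v *)
Require Import Defs.
From HB Require Import structures.
From mathcomp Require Import all_boot all_order all_algebra.
From mathcomp Require Import zify ring lra.
Import Order.TTheory GRing.Theory Num.Theory.
Local Open Scope ring_scope.
Set Implicit Arguments. Unset Strict Implicit.

Lemma mod2k x k : (x < k + k)%N -> (x %% k = if x < k then x else x - k)%N.
Proof.
move=> h; case: ltnP => h2; first by rewrite modn_small.
have -> : x = ((x - k) + k)%N by rewrite subnK.
by rewrite modnDr modn_small ?addnK //; lia.
Qed.

Definition dif k (i j : 'I_k) := ((j + k - i) %% k)%N.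

Lemma difE k (i j : 'I_k) : dif i j = (if (i <= j)%N then (j - i)%N else (j + k - i)%N).
Proof.
rewrite /dif mod2k; last by have := ltn_ord i; have := ltn_ord j; lia.
have := ltn_ord i; have := ltn_ord j.
case: (ltnP (j + k - i) k) => h1; case: (leqP i j) => h2; lia.
Qed.

Lemma difk k (i j : 'I_k) : (dif i j < k)%N.
Proof. rewrite /dif ltn_mod; case: k i j => [[]|]//. Qed.

Lemma ordSE k (i : 'I_k) : val (ordS i) = (if i.+1 == k then 0%N else i.+1).
Proof.
rewrite /= mod2k; last by have := ltn_ord i; lia.
have := ltn_ord i; case: (ltnP i.+1 k) => h1; case: eqP => h2; lia.
Qed.

Lemma ord_predE k (i : 'I_k) : val (ord_pred i) = (if i == 0%N :> nat then k.-1 else i.-1).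
Proof.
rewrite /= mod2k; last by have := ltn_ord i; lia.
have := ltn_ord i; case: (ltnP (i + k).-1 k) => h1; case: eqP => h2; lia.
Qed.

Lemma sum_delta (R : pzRingType) k (i : 'I_k) (F : 'I_k -> R) :
  \sum_(l < k) (l == i)%:R * F l = F i.
Proof.
rewrite (bigD1 i) //= eqxx mul1r big1 ?addr0 // => l /negbTE ->; by rewrite mul0r.
Qed.

Lemma wheelT (R : pzRingType) k (hk : (2 < k)%N) (l i : 'I_k) :
  wheel_c k (dif l i) = ((l == i)%:R + (l == ordS i)%:R : R).
Proof.
have E1 : ((dif l i == 0%N) || (dif l i == k.-1)) = (val l == val i) || (val l == ordS i).
  rewrite difE ordSE /=; have := ltn_ord l; have := ltn_ord i.
  case: (leqP l i) => h1; case: (eqVneq i.+1 k) => h2 hi hl; apply/idP/idP => H; lia.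
have E2 : ~~ ((val l == val i) && (val l == ordS i)).
  rewrite ordSE /=; have := ltn_ord l; have := ltn_ord i.
  case: (eqVneq i.+1 k) => h2 hi hl; apply/negP => H; lia.
rewrite /wheel_c E1 -!val_eqE.
move: E2; case: (val l == val i); case: (val l == val (ordS i)) => //= _;
  by rewrite ?addr0 ?add0r.
Qed.

Lemma wheelC (R : pzRingType) k (hk : (2 < k)%N) (i l : 'I_k) :
  wheel_c k (dif i l) = ((l == i)%:R + (l == ord_pred i)%:R : R).
Proof.
have E1 : ((dif i l == 0%N) || (dif i l == k.-1)) = (val l == val i) || (val l == ord_pred i).
  rewrite difE ord_predE /=; have := ltn_ord l; have := ltn_ord i.
  case: (leqP i l) => h1; case: (eqVneq (i : nat) 0%N) => h2 hi hl; apply/idP/idP => H; lia.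
have E2 : ~~ ((val l == val i) && (val l == ord_pred i)).
  rewrite ord_predE /=; have := ltn_ord l; have := ltn_ord i.
  case: (eqVneq (i : nat) 0%N) => h2 hi hl; apply/negP => H; lia.
rewrite /wheel_c E1 -!val_eqE.
move: E2; case: (val l == val i); case: (val l == val (ord_pred i)) => //= _;
  by rewrite ?addr0 ?add0r.
Qed.

Lemma circE (R : Type) k (f : nat -> R) (i j : 'I_k) : circ k f i j = f (dif i j).
Proof. by rewrite /circ mxE. Qed.

Lemma mulCT (R : pzRingType) k (hk : (2 < k)%N) (M : 'M[R]_k) i j :
  ((circ k (wheel_c k))^T *m M) i j = M i j + M (ordS i) j.
Proof.
rewrite mxE (eq_bigr (fun l => (l == i)%:R * M l j + (l == ordS i)%:R * M l j)).
  by rewrite big_split /= !sum_delta.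
by move=> l _; rewrite mxE circE (wheelT _ hk) mulrDl.
Qed.

Lemma mulC (R : pzRingType) k (hk : (2 < k)%N) (M : 'M[R]_k) i j :
  ((circ k (wheel_c k)) *m M) i j = M i j + M (ord_pred i) j.
Proof.
rewrite mxE (eq_bigr (fun l => (l == i)%:R * M l j + (l == ord_pred i)%:R * M l j)).
  by rewrite big_split /= !sum_delta.
by move=> l _; rewrite circE (wheelC _ hk) mulrDl.
Qed.

Definition prv k t := if t == 0%N then k.-1 else t.-1.
Definition nxt k t := if t == k.-1 then 0%N else t.+1.

Lemma dif_ordS k (i j : 'I_k) : dif (ordS i) j = prv k (dif i j).
Proof.
rewrite /prv !difE ordSE; have := ltn_ord i; have := ltn_ord j.
case: (eqVneq i.+1 k) => h1 hj hi; case: (leqP i j) => h2;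
  try case: (leqP 0 j) => h3; try case: (leqP i.+1 j) => h4; case: eqP => h5; lia.
Qed.

Lemma dif_ord_pred k (i j : 'I_k) : dif (ord_pred i) j = nxt k (dif i j).
Proof.
rewrite /nxt !difE ord_predE; have := ltn_ord i; have := ltn_ord j.
case: (eqVneq (i : nat) 0%N) => h1 hj hi; case: (leqP i j) => h2;
  try case: (leqP k.-1 j) => h3; try case: (leqP i.-1 j) => h4; case: eqP => h5; lia.
Qed.

Lemma prv_nxt k t : (t < k)%N -> prv k (nxt k t) = t.
Proof. by rewrite /prv /nxt => h; case: (eqVneq t k.-1) => [->|h1] //=; rewrite eqxx. Qed.

Lemma AZ (R : comNzRingType) k (hk : (2 < k)%N) (f : nat -> R) (i j : 'I_k) :
  let C := circ k (wheel_c k) in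
  ((C *m C^T + 1%:M) *m circ k f) i j =
    f (dif i j) *+ 3 + f (prv k (dif i j)) + f (nxt k (dif i j)).
Proof.
move=> C; rewrite mulmxDl mul1mx -mulmxA mxE (mulC hk) !(mulCT hk) !circE.
rewrite ord_predK dif_ordS dif_ord_pred.
set a := f (dif i j); set b := f (prv k _); set c := f (nxt k _).
rewrite -[a *+ 3]mulr_natr; ring.
Qed.



Definition zf (R : rcfType) (m : nat) (t : nat) : R :=
  -(2/5) + (2 * (m.+3)%:R / Num.sqrt 5) * (2^+(m.+3) / 2^+t) *
   ((-3 + Num.sqrt 5)^+t / (2^+(m.+3) - (-3 + Num.sqrt 5)^+(m.+3))
    - (-3 - Num.sqrt 5)^+t / (2^+(m.+3) - (-3 - Num.sqrt 5)^+(m.+3))).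

Lemma wfacts (R : rcfType) : let w : R := Num.sqrt 5 in w ^+ 2 = 5 /\ 2 < w /\ w < 3.
Proof.
move=> w; have h : w ^+ 2 = 5 by rewrite sqr_sqrtr.
have h0 : 0 <= w by rewrite sqrtr_ge0.
split=> //; split; nra.
Qed.

Lemma Da_neq0 (R : rcfType) k : (0 < k)%N ->
  (2 : R) ^+ k - (-3 + Num.sqrt 5) ^+ k != 0.
Proof.
move=> hk; have [h1 [h2 h3]] := wfacts R.
rewrite subr_eq0; apply/negP => /eqP h.
have : `|-3 + Num.sqrt 5| ^+ k < (2:R) ^+ k.
  rewrite ltrXn2r ?normr_ge0 ?lt0n_neq0 //.
  by rewrite ltr_norml; apply/andP; split; lra.
by rewrite -normrX -h ger0_norm ?exprn_ge0 // ltxx.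
Qed.

Lemma Db_neq0 (R : rcfType) k : (0 < k)%N ->
  (2 : R) ^+ k - (-3 - Num.sqrt 5) ^+ k != 0.
Proof.
move=> hk; have [h1 [h2 h3]] := wfacts R.
rewrite subr_eq0; apply/negP => /eqP h.
have : (2:R) ^+ k < `|-3 - Num.sqrt 5| ^+ k.
  rewrite ltrXn2r ?lt0n_neq0 //.
  by rewrite ltr_normr; apply/orP; right; lra.
by rewrite -normrX -h ger0_norm ?exprn_ge0 // ltxx.
Qed.

Lemma zhom (R : rcfType) m u : zf R m u + zf R m u.+1 *+ 3 + zf R m u.+2 = -2.
Proof.
have [h1 [h2 h3]] := wfacts R.
have Da := Da_neq0 R (ltn0Sn m.+2); have Db := Db_neq0 R (ltn0Sn m.+2).
rewrite /zf.
set w := Num.sqrt 5 in h1 h2 h3 Da Db *.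
set K := (2:R) ^+ m.+3 in Da Db *.
set A := (-3 + w) ^+ m.+3 in Da *.
set B := (-3 - w) ^+ m.+3 in Db *.
have ea1 : (-3 + w) ^+ u.+1 = (-3 + w) * (-3 + w) ^+ u by rewrite exprS.
have ea2 : (-3 + w) ^+ u.+2 = (14 - 6 * w) * (-3 + w) ^+ u.
  rewrite !exprS mulrA; congr (_ * _).
  have -> : (-3 + w) * (-3 + w) = w^+2 - 6*w + 9 by ring.
  by rewrite h1; ring.
have eb1 : (-3 - w) ^+ u.+1 = (-3 - w) * (-3 - w) ^+ u by rewrite exprS.
have eb2 : (-3 - w) ^+ u.+2 = (14 + 6 * w) * (-3 - w) ^+ u.
  rewrite !exprS mulrA; congr (_ * _).
  have -> : (-3 - w) * (-3 - w) = w^+2 + 6*w + 9 by ring.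
  by rewrite h1; ring.
have e21 : (2:R) ^+ u.+1 = 2 * 2 ^+ u by rewrite exprS.
have e22 : (2:R) ^+ u.+2 = 4 * 2 ^+ u by rewrite !exprS; ring.
have w0 : w != 0 by apply/eqP => h; rewrite h in h2; lra.
have t0 : (2:R) ^+ u != 0 by rewrite expf_neq0 // pnatr_eq0.
rewrite ea1 ea2 eb1 eb2 e21 e22 -[_ *+ 3]mulr_natr.
by field; rewrite Da Db t0 w0.
Qed.

Lemma zper (R : rcfType) m : zf R m m.+3 = zf R m 0.
Proof.
have [h1 [h2 h3]] := wfacts R.
have Da := Da_neq0 R (ltn0Sn m.+2); have Db := Db_neq0 R (ltn0Sn m.+2).
rewrite /zf.
set w := Num.sqrt 5 in h1 h2 h3 Da Db *.
set K := (2:R) ^+ m.+3 in Da Db *.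
set A := (-3 + w) ^+ m.+3 in Da *.
set B := (-3 - w) ^+ m.+3 in Db *.
have w0 : w != 0 by apply/eqP => h; rewrite h in h2; lra.
have K0 : K != 0 by rewrite expf_neq0 // pnatr_eq0.
rewrite !expr0; by field; rewrite Da Db K0 w0.
Qed.

Lemma zjump (R : rcfType) m : zf R m 1 - zf R m m.+4 = 2 * (m.+3)%:R.
Proof.
have [h1 [h2 h3]] := wfacts R.
have Da := Da_neq0 R (ltn0Sn m.+2); have Db := Db_neq0 R (ltn0Sn m.+2).
rewrite /zf.
set w := Num.sqrt 5 in h1 h2 h3 Da Db *.
set K := (2:R) ^+ m.+3 in Da Db *.
set A := (-3 + w) ^+ m.+3 in Da *.
set B := (-3 - w) ^+ m.+3 in Db *.
have w0 : w != 0 by apply/eqP => h; rewrite h in h2; lra.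
have K0 : K != 0 by rewrite expf_neq0 // pnatr_eq0.
rewrite !expr1 !(exprS _ m.+3) -/K -/A -/B; by field; rewrite Da Db K0 w0.
Qed.

Lemma H1 (R : rcfType) m t : (t < m.+3)%N ->
  zf R m t *+ 3 + zf R m (prv m.+3 t) + zf R m (nxt m.+3 t) =
  2 * ((m.+3)%:R *+ (t == 0%N) - 1).
Proof.
move=> ht; rewrite -[_ *+ 3]mulr_natr /prv /nxt /=.
case: (eqVneq t 0%N) => [->|t0] /=.
  have := zhom R m m.+2; have := zper R m; have := zjump R m.
  rewrite mulr1n; lra.
case: (eqVneq t m.+2) => [->|tm] /=.
  have := zhom R m m.+1; have := zper R m; lra.
case: t ht t0 tm => [|u] //= ht _ _.
have := zhom R m u; rewrite mulr0n; lra.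
Qed.

Definition dd (R : rcfType) (n : nat) (j : nat) : R :=
  let s5 : R := Num.sqrt 5 in
  let a : R := -3 + s5 in
  let b : R := -3 - s5 in
    if j == 0%N then
      5^-1 + (4 * (n.-1)%:R / s5) *
        ((2 ^+ (n - 2) + a ^+ (n - 2)) / (2 ^+ (n - 1) - a ^+ (n - 1))
         - (2 ^+ (n - 2) + b ^+ (n - 2)) / (2 ^+ (n - 1) - b ^+ (n - 1)))
    else
      5^-1 + (2 ^+ (n + 1 - j) * (n.-1)%:R / (5 + s5)) *
        (2 * a ^+ j.-1 / (2 ^+ (n - 1) - a ^+ (n - 1))
         - b ^+ j / (2 ^+ (n - 1) - b ^+ (n - 1))).

Lemma H2zero (R : rcfType) m : 1 + zf R m 0 + zf R m m.+2 = dd R m.+4 0.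
Proof.
rewrite /dd /= !subSS !subn0.
have [h1 [h2 h3]] := wfacts R.
have Da := Da_neq0 R (ltn0Sn m.+2); have Db := Db_neq0 R (ltn0Sn m.+2).
rewrite /zf !expr0.
rewrite !(exprS _ m.+2) in Da Db *.
set w := Num.sqrt 5 in h1 h2 h3 Da Db *.
have w0 : w != 0 by apply/eqP => h; rewrite h in h2; lra.
have K0 : (2:R) ^+ m.+2 != 0 by rewrite expf_neq0 // pnatr_eq0.
by field; rewrite Da Db K0 w0.
Qed.

Lemma H2succ (R : rcfType) m u : (u <= m.+1)%N ->
  1 + zf R m u.+1 + zf R m u = dd R m.+4 u.+1.
Proof.
move=> hu.
have he : (m.+4 + 1 - u.+1 = (m.+3 - u).+1)%N by lia.
rewrite /dd he /= !subSS !subn0.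
have [h1 [h2 h3]] := wfacts R.
have Da := Da_neq0 R (ltn0Sn m.+2); have Db := Db_neq0 R (ltn0Sn m.+2).
have hK : (2:R) ^+ m.+3 = 2 ^+ (m.+3 - u) * 2 ^+ u by rewrite -exprD subnK //; lia.
have w0 : Num.sqrt 5 != 0 :> R by apply/negbT/gt_eqF; lra.
have w5 : 5 + Num.sqrt 5 != 0 :> R by apply/negbT/gt_eqF; lra.
rewrite exprS /zf.
set w := Num.sqrt 5 in h1 h2 h3 Da Db w0 w5 *.
set A := (-3 + w) ^+ m.+3 in Da *.
set B := (-3 - w) ^+ m.+3 in Db *.
rewrite hK in Da Db *.
set E := (2:R) ^+ (m.+3 - u) in Da Db *.
set U := (2:R) ^+ u in Da Db *.
have E0 : E != 0 by rewrite expf_neq0 // pnatr_eq0.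
have U0 : U != 0 by rewrite expf_neq0 // pnatr_eq0.
set Da' := E * U - A in Da *.
set Db' := E * U - B in Db *.
set au := (-3 + w) ^+ u.
set bu := (-3 - w) ^+ u.
rewrite !exprS -/au -/bu -/U.
set c : R := (m.+3)%:R.
have Ea : (w - 1) / w = 4 / (5 + w).
  apply/eqP; rewrite eqr_div //; apply/eqP.
  have -> : (w - 1) * (5 + w) = w ^+ 2 + 4 * w - 5 by ring.
  by rewrite h1; ring.
have Eb : 2 * (-1 - w) / w = 4 * (-3 - w) / (5 + w).
  apply/eqP; rewrite eqr_div //; apply/eqP.
  have -> : 2 * (-1 - w) * (5 + w) = - 2 * w ^+ 2 - 12 * w - 10 by ring.
  have -> : 4 * (-3 - w) * w = - 4 * w ^+ 2 - 12 * w by ring.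
  by rewrite h1; ring.
apply: (@eq_trans _ _ (5^-1 + c * (E / 2) * (2 * au * ((w - 1) / w) / Da' - bu * (2 * (-1 - w) / w) / Db'))).
  by field; rewrite Da Db U0 w0.
rewrite Ea Eb.
by field; rewrite Da Db w5.
Qed.

Lemma H2 (R : rcfType) m t : (t < m.+3)%N ->
  1 + zf R m t + zf R m (prv m.+3 t) = dd R m.+4 t.
Proof.
rewrite /prv; case: t => [|u] h /=; first exact: H2zero.
by rewrite H2succ.
Qed.

Lemma dif_eq0 k (i j : 'I_k) : (dif i j == 0%N) = (i == j).
Proof.
rewrite difE -val_eqE /=; have := ltn_ord i; have := ltn_ord j.
case: (leqP i j) => h hi hj; apply/idP/idP => H; lia.
Qed.

Theorem mainTheorem4 (R : rcfType) (n : nat) (hn : (4 <= n)%N) :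
  let k := n.-1 in
  let C : 'M[R]_k := circ k (wheel_c k) in
  let X : 'M[R]_k :=
    (2 : R) *: (invmx (C *m C^T + 1%:M) *m ((k%:R : R)%:M - Jmx k)) in
  let Y : 'M[R]_k := Jmx k + C^T *m X in
  let s5 : R := Num.sqrt 5 in
  let a : R := -3 + s5 in
  let b : R := -3 - s5 in
  let d : nat -> R := fun j =>
    if j == 0%N then
      5^-1 + (4 * (n.-1)%:R / s5) *
        ((2 ^+ (n - 2) + a ^+ (n - 2)) / (2 ^+ (n - 1) - a ^+ (n - 1))
         - (2 ^+ (n - 2) + b ^+ (n - 2)) / (2 ^+ (n - 1) - b ^+ (n - 1)))
    else
      5^-1 + (2 ^+ (n + 1 - j) * (n.-1)%:R / (5 + s5)) *
        (2 * a ^+ j.-1 / (2 ^+ (n - 1) - a ^+ (n - 1))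
         - b ^+ j / (2 ^+ (n - 1) - b ^+ (n - 1))) in
  Y = circ k d.
Proof.
case: n hn => [|[|[|[|m]]]] // _.
move=> k C X Y s5 a b d.
have hk : (2 < m.+3)%N by [].
pose Z := circ m.+3 (zf R m).
have AZ2 : (C *m C^T + 1%:M) *m Z = 2 *: ((k%:R : R)%:M - Jmx k).
  apply/matrixP => i j; rewrite (AZ hk) !mxE H1 ?difk // dif_eq0.
  by case: (i == j).
have W : (C *m C^T + 1%:M) *m circ m.+3 (fun t => (2 * (m.+3)%:R)^-1 * (zf R m t + 2/5)) = 1%:M.
  apply/matrixP => i j; rewrite (AZ hk) !mxE.
  have := H1 R (m:=m) (difk i j); rewrite dif_eq0.
  set z0 := zf R m _; set z1 := zf R m _; set z2 := zf R m _ => h.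
  have k0 : 3 + m%:R != 0 :> R by apply/negbT/gt_eqF; have := ler0n R m; lra.
  apply: (@eq_trans _ _ ((2 * (m.+3)%:R)^-1 * (z0 *+ 3 + z1 + z2 + 2))).
    by field.
  rewrite h; case: (i == j) => /=; rewrite ?mulr1n ?mulr0n; by field.
have [Au _] := mulmx1_unit W.
have XZ : X = Z by rewrite /X scalemxAr -AZ2 mulKmx.
rewrite /Y XZ; apply/matrixP => i j.
rewrite [LHS]mxE (mulCT hk) /Jmx mxE !circE dif_ordS addrA.
exact: (H2 R (difk i j)).
Qed.
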